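(* Let $v,j,n$ be positive integers, $\mathcal{V}=\{1,\dots,v\}$, $\mathcal{X}=2^{\mathcal{V}}$, $\mathcal{Y}=\binom{\mathcal{V}}{j}\times\{0,1\}^j$, $p$ a probability distribution on $\mathcal{X}$ and $u:\mathcal{X}\times2^{\mathcal{X}}\to\mathbb{R}^+$ semantic weights. For reports $X^n=(X(1),\dots,X(n))$ i.i.d. with law $p$, the minimum, over all summarizers $s\in\mathcal{P}(\mathcal{Y}|\mathcal{X}^n)$ of length $j$ (with $Y\sim s_{X^n}(y)$), of the semantic loss $\ell(X(1);Y\mid u)$ equals $$\sum_{x\in\mathcal{X}}p(x)\min_{y\in\mathcal{Y}}\sum_{\mathcal{W}\subseteq\mathcal{X}}u(x,\mathcal{W})\bigl(1-i_y(\mathcal{W})\bigr),$$ where $i_y(\mathcal{W})=\sum_{x\in\mathcal{W}}i_y(x)$.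
   Context: Reports are elements $x\in\mathcal{X}=2^{\mathcal{V}}$, equivalently binary vectors $(x_1,\dots,x_v)$. A summary is $y=(\hat y,\tilde y)$ with $\hat y\subseteq\mathcal{V}$, $|\hat y|=j$, and $\tilde y\in\{0,1\}^j$; write $y\subset x$ if $\tilde y$ equals the restriction of $x$ to the coordinates in $\hat y$. Let $\mathcal{X}(y)=\{x\in\mathcal{X}: y\subset x\}$ and $p(A)=\sum_{a\in A}p(a)$. The summary interpretation is $i_y(x)=1_{\mathcal{X}(y)}(x)\,p(x)/p(\mathcal{X}(y))$. Semantic weights are any $u:\mathcal{X}\times2^{\mathcal{X}}\to\mathbb{R}^+$ with $u(x,\mathcal{W})=0$ whenever $x\notin\mathcal{W}$. A summarizer of length $j$ is a conditional distribution $s\in\mathcal{P}(\mathcal{Y}|\mathcal{X}^n)$, producing $Y\sim s_{X^n}(y)$. For $\mathcal{W}\subseteq\mathcal{X}$, $\mathcal{P}(\mathcal{W}|\mathcal{X})$ is the set of conditional distributions on $\mathcal{X}$ given an element of $\mathcal{X}$ supported on $\mathcal{W}$. The semantic loss is $$\ell(X;Y\mid u)=\mathbb{E}\Bigl[\sum_{\mathcal{W}\subseteq\mathcal{X}}\inf_{q\in\mathcal{P}(\mathcal{W}|\mathcal{X})} u(X,\mathcal{W})\sum_{x\in\mathcal{X}}\tfrac12\bigl|q_X(x)-i_Y(x)\bigr|\Bigr].$$ *)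

(* Defs.v *)
From HB Require Import structures.
From mathcomp Require Import all_boot all_order all_algebra.
From mathcomp Require Import all_classical all_reals.
Set Implicit Arguments. Unset Strict Implicit. Unset Printing Implicit Defensive.
Import Order.TTheory GRing.Theory Num.Theory.
Local Open Scope ring_scope.
Local Open Scope classical_set_scope.

(* Reports: binary vectors (x_1,...,x_v), i.e. elements of 2^V, V = {0..v-1}. *)
Definition report (v : nat) := {ffun 'I_v -> bool}.

(* Summaries y = (yhat, ytilde): yhat a j-subset of V, ytilde in {0,1}^j. *)
Definition summary (v j : nat) :=
  ({yh : {set 'I_v} | #|yh| == j} * {ffun 'I_j -> bool})%type.

(* y \subset x : ytilde is the restriction of x to the coordinates of yhat,
   listed in increasing order. *)
Definition subsum (v j : nat) (y : summary v j) (x : report v) : bool :=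
  [seq x i | i <- enum (val y.1)] == [seq y.2 k | k <- enum 'I_j].

Definition Xof (v j : nat) (y : summary v j) : {set report v} :=
  [set x | subsum y x].

Definition pmass (R : realType) (v : nat) (p : report v -> R)
  (A : {set report v}) : R := \sum_(x in A) p x.

Definition is_dist (R : realType) (T : finType) (p : T -> R) : Prop :=
  (forall x, 0 <= p x) /\ \sum_x p x = 1.

Definition interp (R : realType) (v j : nat) (p : report v -> R)
  (y : summary v j) (x : report v) : R :=
  if x \in Xof y then p x / pmass p (Xof y) else 0.

Definition interpW (R : realType) (v j : nat) (p : report v -> R)
  (y : summary v j) (W : {set report v}) : R :=
  \sum_(x in W) interp p y x.

Definition sem_weights (R : realType) (v : nat)
  (u : report v -> {set report v} -> R) : Prop :=
  (forall x (W : {set report v}), 0 <= u x W) /\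
  (forall x (W : {set report v}), x \notin W -> u x W = 0).

Definition cond_dists (R : realType) (v : nat) (W : {set report v})
  : set (report v -> report v -> R) :=
  [set q | (forall x0 x, 0 <= q x0 x) /\ (forall x0, \sum_x q x0 x = 1) /\
           (forall x0 x, x \notin W -> q x0 x = 0)].

Definition tvd (R : realType) (v : nat) (r1 r2 : report v -> R) : R :=
  \sum_x 2^-1 * `|r1 x - r2 x|.

(* inf_{q in P(W|X)} u(x,W) sum_x' 1/2 |q_x(x') - i_y(x')|
   (mathcomp-analysis [inf] of the empty set is 0) *)
Definition inner (R : realType) (v j : nat) (p : report v -> R)
  (u : report v -> {set report v} -> R) (x : report v)
  (W : {set report v}) (y : summary v j) : R :=
  inf [set u x W * tvd (q x) (interp p y) | q in @cond_dists R v W].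

Definition is_summarizer (R : realType) (v j n : nat)
  (s : {ffun 'I_n -> report v} -> summary v j -> R) : Prop :=
  forall xs, is_dist (s xs).

(* semantic loss l(X(1); Y | u) with X^n iid ~ p, Y ~ s_{X^n} *)
Definition sem_loss (R : realType) (v j n : nat) (hn : (0 < n)%N)
  (p : report v -> R) (u : report v -> {set report v} -> R)
  (s : {ffun 'I_n -> report v} -> summary v j -> R) : R :=
  \sum_(xs : {ffun 'I_n -> report v})
     (\prod_(k < n) p (xs k)) *
     \sum_(y : summary v j) s xs y *
        \sum_(W : {set report v}) inner p u (xs (Ordinal hn)) W y.

Definition opt_value (R : realType) (v j : nat) (p : report v -> R)
  (u : report v -> {set report v} -> R) : R :=
  \sum_(x : report v) p x *
     inf (range (fun y : summary v j =>
        \sum_(W : {set report v}) u x W * (1 - interpW p y W))).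

(* Main.v *)
Require Import Defs.
From mathcomp Require Import all_boot all_order all_algebra.
From mathcomp Require Import all_classical all_reals.
From mathcomp Require Import ring lra.
Import Order.TTheory GRing.Theory Num.Theory.
Local Open Scope ring_scope.
Local Open Scope classical_set_scope.

Lemma exmin (R : realType) (T : finType) (F : T -> R) (t0 : T) :
  exists m, forall t, F m <= F t.
Proof.
exists (Order.arg_min t0 xpredT F); move=> t.
by case: arg_minP => // i _ H; apply: H.
Qed.

Lemma inf_minE (R : realType) (E : set R) m : E m -> lbound E m -> inf E = m.
Proof.
move=> Em lb; apply/le_anti; apply/andP; split.
  by apply: (ge_inf (ex_intro _ m lb)).
by apply: lb_le_inf => //; exists m.
Qed.

Lemma marginal (R : realType) (T : finType) n (i0 : 'I_n) (p : T -> R) (h : T -> R) :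
  \sum_x p x = 1 ->
  \sum_(xs : {ffun 'I_n -> T}) (\prod_k p (xs k)) * h (xs i0) = \sum_x p x * h x.
Proof.
move=> p1.
pose F := fun (k : 'I_n) (x : T) => if k == i0 then p x * h x else p x.
have H : \prod_(k : 'I_n) \sum_(x : T) F k x =
   \sum_(f : {ffun 'I_n -> T}) \prod_k F k (f k) := bigA_distr_bigA F.
move: H; rewrite (bigD1 i0) //= {1}/F eqxx [X in _ * X]big1 ?mulr1; last first.
  by move=> k /negbTE hk; rewrite /F hk p1.
move=> ->; apply: eq_bigr => xs _.
rewrite (bigD1 i0) //= [in RHS](bigD1 i0) //=.
have -> : \prod_(i < n | i != i0) F i (xs i) = \prod_(i < n | i != i0) p (xs i).
  by apply: eq_bigr => k /negbTE hk; rewrite /F hk.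
rewrite /F eqxx; ring.
Qed.

Lemma interp_ge0 {R : realType} {v j : nat} {p : report v -> R} {y : summary v j} x :
  is_dist p -> 0 < pmass p (Xof y) -> 0 <= interp p y x.
Proof.
move=> [hp0 _] hpy; rewrite /interp; case: ifP => // _.
by rewrite divr_ge0 // ltW.
Qed.

Lemma interp_sum1 {R : realType} {v j : nat} {p : report v -> R} {y : summary v j} :
  0 < pmass p (Xof y) -> \sum_x interp p y x = 1.
Proof.
move=> hpy; rewrite /interp -big_mkcond /= -mulr_suml.
by rewrite -/(pmass p (Xof y)) mulfV // gt_eqF.
Qed.

Lemma split_W {R : realType} {v : nat} (W : {set report v}) (f : report v -> R) :
  \sum_x f x = \sum_(x in W) f x + \sum_(x | x \notin W) f x.
Proof. by rewrite (bigID (fun x => x \in W)). Qed.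

Lemma interpW_le1 {R : realType} {v j : nat} {p : report v -> R} {y : summary v j} (W : {set report v}) :
  is_dist p -> 0 < pmass p (Xof y) -> interpW p y W <= 1.
Proof.
move=> hp hpy; rewrite -(interp_sum1 hpy) (split_W W) /interpW lerDl.
by apply: sumr_ge0 => x _; apply: interp_ge0.
Qed.

Lemma tvd_lb {R : realType} {v j : nat} {p : report v -> R} {y : summary v j} (W : {set report v})
  (r : report v -> R) :
  is_dist p -> 0 < pmass p (Xof y) ->
  \sum_x r x = 1 -> (forall x, x \notin W -> r x = 0) ->
  1 - interpW p y W <= tvd r (interp p y).
Proof.
move=> hp hpy r1 r0.
rewrite /tvd -mulr_sumr (split_W W).
have e1 : \sum_(x | x \notin W) `|r x - interp p y x| =
          \sum_(x | x \notin W) interp p y x.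
  apply: eq_bigr => x hx; rewrite r0 // sub0r normrN ger0_norm //.
  exact: interp_ge0.
have e2 : \sum_(x | x \notin W) interp p y x = 1 - interpW p y W.
  rewrite -(interp_sum1 hpy) (split_W W) /interpW; lra.
have rW : \sum_(x in W) r x = 1.
  rewrite -r1 (split_W W) [X in _ = _ + X]big1 ?addr0 //.
  all: try by move=> x; apply: r0.
have e3 : 1 - interpW p y W <= \sum_(x in W) `|r x - interp p y x|.
  apply: le_trans (ler_norm_sum _ _ _).
  rewrite sumrB rW /interpW; exact: ler_norm.
rewrite e1 e2; lra.
Qed.

Lemma inner_eq {R : realType} {v j : nat} (p : report v -> R)
  (u : report v -> {set report v} -> R) (y : summary v j) x (W : {set report v}) :
  is_dist p -> 0 < pmass p (Xof y) -> sem_weights u ->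
  inner p u x W y = u x W * (1 - interpW p y W).
Proof.
move=> hp hpy [hu0 hu1].
have a0 : 0 <= 1 - interpW p y W by rewrite subr_ge0 interpW_le1.
case: (set_0Vmem W) => [-> | [w hw]].
  have -> : u x finset.set0 = 0 by apply: hu1; rewrite inE.
  rewrite mul0r /inner.
  have -> : [set u x finset.set0 * tvd (q x) (interp p y) | q in @cond_dists R v finset.set0] = set0.
    apply/seteqP; split => // z [q [_ [hs hz]] _].
    have := hs x; rewrite big1 //; last by move=> x' _; apply: hz; rewrite inE.
    by move/eqP; rewrite eq_sym oner_eq0.
  exact: inf0.
rewrite /inner; apply: inf_minE.
  pose a := 1 - interpW p y W.
  pose q := fun (_ : report v) (x' : report v) =>
    if x' \in W then interp p y x' + (if x' == w then a else 0) else 0.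
  exists q.
    split; [|split].
    - move=> x0 x'; rewrite /q; case: ifP => // _.
      apply: addr_ge0; first exact: interp_ge0.
      by case: ifP.
    - move=> x0; rewrite (split_W W) [X in _ + X]big1 ?addr0; last first.
        by move=> x' hx'; rewrite /q (negbTE hx').
      rewrite (eq_bigr (fun x' => interp p y x' + (if x' == w then a else 0))); last first.
        by move=> x' hx'; rewrite /q hx'.
      rewrite big_split /= [X in _ + X](bigD1 w) //= eqxx [X in _ + (_ + X)]big1 ?addr0; last first.
        by move=> x' /andP[_ /negbTE ->].
      rewrite /a /interpW; lra.
    - by move=> x0 x' hx'; rewrite /q (negbTE hx').
  congr (_ * _); rewrite /tvd -mulr_sumr (split_W W).
  rewrite [X in _ * (_ + X)](eq_bigr (fun x' => interp p y x')); last first.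
    move=> x' hx'; rewrite /q (negbTE hx') sub0r normrN ger0_norm //.
    exact: interp_ge0.
  rewrite [X in _ * (X + _)](eq_bigr (fun x' => if x' == w then a else 0)); last first.
    move=> x' hx'; rewrite /q hx' addrAC subrr add0r ger0_norm //.
    by case: ifP.
  rewrite (bigD1 w) //= eqxx [X in _ * (_ + X + _)]big1 ?addr0; last first.
    by move=> x' /andP[_ /negbTE ->].
  have e2 : \sum_(x | x \notin W) interp p y x = 1 - interpW p y W.
    rewrite -(interp_sum1 hpy) (split_W W) /interpW; lra.
  rewrite e2 /a; lra.
move=> z [q [q0 [q1 qW]] <-].
apply: ler_wpM2l => //.
exact: (@tvd_lb R v j p y W (q x) hp hpy (q1 x) (qW x)).
Qed.

Lemma argmin_le (R : realType) (T : finType) (F : T -> R) (t0 : T) t :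
  F (Order.arg_min t0 xpredT F) <= F t.
Proof. by case: arg_minP => // i _ H; apply: H. Qed.

Local Close Scope classical_set_scope.

Theorem corollary1 (R : realType) (v j n : nat)
  (hv : (0 < v)%N) (hj : (0 < j)%N) (hn : (0 < n)%N) (hjv : (j <= v)%N)
  (p : report v -> R) (hp : is_dist p)
  (hpy : forall y : summary v j, 0 < pmass p (Xof y))
  (u : report v -> {set report v} -> R) (hu : sem_weights u) :
  (forall s : {ffun 'I_n -> report v} -> summary v j -> R,
      is_summarizer s -> opt_value j p u <= sem_loss hn p u s) /\
  (exists s : {ffun 'I_n -> report v} -> summary v j -> R,
      is_summarizer s /\ sem_loss hn p u s = opt_value j p u).
Proof.
have [hp0 hp1] := hp.
pose F (x : report v) (y : summary v j) := \sum_(W : {set report v}) u x W * (1 - interpW p y W).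
have hinner : forall x y, \sum_W inner p u x W y = F x y.
  by move=> x y; apply: eq_bigr => W _; apply: inner_eq.
have S : #|[set widen_ord hjv i | i : 'I_j]| == j.
  by rewrite card_imset ?cardsT ?card_ord //; by move=> a b /(congr1 val) /= /val_inj.
pose y0 : summary v j := (exist (fun yh : {set 'I_v} => #|yh| == j) _ S, [ffun _ => false]).
pose ym x := Order.arg_min y0 xpredT (F x).
have hym : forall x y, F x (ym x) <= F x y by move=> x y; apply: argmin_le.
have hopt : opt_value j p u = \sum_x p x * F x (ym x).
  apply: eq_bigr => x _; congr (_ * _); apply: inf_minE.
    by exists (ym x).
  by move=> z [y _ <-]; apply: hym.
pose i0 := Ordinal hn.
have hloss : forall s, sem_loss hn p u s =
   \sum_(xs : {ffun 'I_n -> report v}) (\prod_k p (xs k)) *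
     \sum_(y : summary v j) s xs y * F (xs i0) y.
  move=> s; apply: eq_bigr => xs _; congr (_ * _); apply: eq_bigr => y _.
  by rewrite hinner.
split.
  move=> s hs; rewrite hloss hopt -(@marginal R _ n i0 p (fun x => F x (ym x)) hp1).
  apply: ler_sum => xs _; apply: ler_wpM2l.
    by apply: prodr_ge0 => k _.
  have [s0 s1] := hs xs.
  apply: (@le_trans _ _ (\sum_y s xs y * F (xs i0) (ym (xs i0)))).
    by rewrite -mulr_suml s1 mul1r.
  by apply: ler_sum => y _; apply: ler_wpM2l.
exists (fun xs y => if y == ym (xs i0) then 1 else 0); split.
  move=> xs; split; first by move=> y; case: ifP.
  by rewrite (bigD1 (ym (xs i0))) //= eqxx big1 ?addr0 // => y /negbTE ->.
rewrite hloss hopt -(@marginal R _ n i0 p (fun x => F x (ym x)) hp1).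
apply: eq_bigr => xs _; congr (_ * _).
rewrite (bigD1 (ym (xs i0))) //= eqxx mul1r big1 ?addr0 // => y /negbTE ->.
by rewrite mul0r.
Qed.
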